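(* Let $\phi$ be an orientation-preserving isometry of a spin, closed, hyperbolic $2$-manifold $M=\Gamma\backslash H^2$, and let $\hat\phi$ be a lift of $\phi$ to a symmetry of a spin structure $\hat\Gamma\backslash\mathrm{SU}(1,1;\mathbb C)$ on $M$. Let $f\in\mathrm{SO}^+(2,1)$ with $\phi=f_\star$, and let $\hat f\in\mathrm{SU}(1,1;\mathbb C)$ be the lift of $f$ with $\hat\phi=\hat f_\star$. Let $P$ be an isolated fixed point of $\phi$, and let $x\in H^2$ with $\Gamma x=P$. Let $g\in\mathrm{SO}^+(2,1)$ with $ge_3=x$, and let $\hat g\in\mathrm{SU}(1,1;\mathbb C)$ be a lift of $g$. Let $\gamma$ be the unique element of $\Gamma$ such that $\gamma fx=x$, and let $\hat\gamma$ be the unique element of $\hat\Gamma$ lifting $\gamma$. Then $\hat g^{-1}\hat\gamma\hat f\hat g=\mathrm{diag}(u,\overline u)$ with $u$ a unit complex number, and $$\nu(\hat\phi,P)=\frac{1}{2\,\mathrm{Im}(u)\mathbf i}.$$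
   Context: $\mathrm{SU}(1,1;\mathbb C)=\{A\in\mathbb C(2):A^*JA=J,\ \det A=1\}$, $J=\mathrm{diag}(1,-1)$, acts on $B^2=\{z\in\mathbb C:|z|<1\}$ by $\begin{pmatrix}a&b\\c&d\end{pmatrix}\cdot z=(az+b)(cz+d)^{-1}$. Let $H^2=\{x\in\mathbb R^3:x_1^2+x_2^2-x_3^2=-1,\ x_3>0\}$ and $\zeta:B^2\to H^2$, $\zeta(z)=(2z/(1-|z|^2),(1+|z|^2)/(1-|z|^2))$ (identifying $z_1+z_2\mathbf i$ with $(z_1,z_2)$). The double covering epimorphism $\eta:\mathrm{SU}(1,1;\mathbb C)\to\mathrm{SO}^+(2,1)$ (representing $\mathrm{Spin}^+(2,1)$) is characterized by $\zeta(A\cdot z)=\eta(A)\zeta(z)$. $\Gamma\subset\mathrm{SO}^+(2,1)$ is discrete and torsion-free with $M$ closed, and $\hat\Gamma\subset\mathrm{SU}(1,1;\mathbb C)$ maps isomorphically onto $\Gamma$. Isometries $f_\star(\Gamma x)=\Gamma fx$ ($f$ normalizing $\Gamma$), symmetries $\hat f_\star(\hat\Gamma\hat h)=\hat\Gamma\hat f\hat h$ ($\hat f$ normalizing $\hat\Gamma$). $\mathrm{Spin}(2)=\eta^{-1}(\mathrm{Stab}(e_3))=\{\mathrm{diag}(u,\overline u):|u|=1\}$ with half-spin representations (Atiyah–Bott convention) $\Delta_2^+(\mathrm{diag}(u,\overline u))=\overline u$, $\Delta_2^-(\mathrm{diag}(u,\overline u))=u$. If $\hat\phi=\hat f_\star$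 and $P=\Gamma ge_3$ with $\hat g$ a lift of $g$, there is a unique $s\in\mathrm{Spin}(2)$ with $\hat\Gamma\hat f\hat g=\hat\Gamma\hat gs$, and the local contribution of the isolated fixed point $P$ to the Atiyah–Singer $G$-spin formula is $\nu(\hat\phi,P)=\dfrac{\mathrm{tr}\,\Delta_2^+(s)-\mathrm{tr}\,\Delta_2^-(s)}{|\det(I-d\phi_P)|}$. *)

(* Defs.v *)
From HB Require Import structures.
From mathcomp Require Import all_boot all_order all_algebra.
From mathcomp Require Import reals.
From mathcomp.real_closed Require Import complex.
Set Implicit Arguments. Unset Strict Implicit. Unset Printing Implicit Defensive.
Import Order.TTheory GRing.Theory Num.Theory.
Local Open Scope ring_scope.

Section Defs.
Variable R : realType.
Local Notation C := (complex R).

Definition diag2 (a b : C) : 'M[C]_2 :=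
  \matrix_(i < 2, j < 2) (if i == j then (if i == 0 then a else b) else 0).

Definition J2 : 'M[C]_2 := diag2 1 (-1).

Definition adjC (A : 'M[C]_2) : 'M[C]_2 := (map_mx (@conjc R) A)^T.

Definition SU11 (A : 'M[C]_2) : Prop := adjC A *m J2 *m A = J2 /\ \det A = 1.

Definition nsq (z : C) : R := complex.Re z ^+ 2 + complex.Im z ^+ 2.

Definition in_disk (z : C) : Prop := nsq z < 1.

Definition mob (A : 'M[C]_2) (z : C) : C :=
  (A 0 0 * z + A 0 1) / (A 1 0 * z + A 1 1).

Definition vec3 (a b c : R) : 'cV[R]_3 :=
  \col_(i < 3) (if i == 0 then a else if i == 1 then b else c).

Definition e3 : 'cV[R]_3 := vec3 0 0 1.

Definition zeta (z : C) : 'cV[R]_3 :=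
  vec3 (2 * complex.Re z / (1 - nsq z)) (2 * complex.Im z / (1 - nsq z))
       ((1 + nsq z) / (1 - nsq z)).

Definition J3 : 'M[R]_3 :=
  \matrix_(i < 3, j < 3) (if i == j then (if i == 2 then -1 else 1) else 0).

Definition lor (x y : 'cV[R]_3) : R := (x^T *m J3 *m y) 0 0.

Definition H2 (x : 'cV[R]_3) : Prop := lor x x = -1 /\ 0 < x 2 0.

Definition SOp21 (f : 'M[R]_3) : Prop :=
  f^T *m J3 *m f = J3 /\ \det f = 1 /\ 0 < f 2 2.

Definition subgroup_SO (G : 'M[R]_3 -> Prop) : Prop :=
  [/\ forall g, G g -> SOp21 g, G 1%:M,
      forall a b, G a -> G b -> G (a *m b) & forall a, G a -> G (invmx a)].

Definition subgroup_SU (G : 'M[C]_2 -> Prop) : Prop :=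
  [/\ forall g, G g -> SU11 g, G 1%:M,
      forall a b, G a -> G b -> G (a *m b) & forall a, G a -> G (invmx a)].

(* a subgroup of a topological group is discrete iff 1 is isolated in it *)
Definition discrete (G : 'M[R]_3 -> Prop) : Prop :=
  exists eps : R, 0 < eps /\
    forall g, G g -> (forall i j, `|g i j - (1%:M : 'M[R]_3) i j| < eps) ->
      g = 1%:M.

Definition torsion_free (G : 'M[R]_3 -> Prop) : Prop :=
  forall g n, G g -> (0 < n)%N -> g ^+ n = 1 -> g = 1.

(* M = G\H^2 is compact: every orbit meets a fixed closed hyperbolic ball
   around e3 (cosh of the hyperbolic distance from e3 to y is -lor e3 y) *)
Definition cocompact (G : 'M[R]_3 -> Prop) : Prop :=
  exists D : R, forall y, H2 y -> exists g, G g /\ - lor e3 (g *m y) <= D.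

Definition normalizes (n : nat) (K : comUnitRingType) (G : 'M[K]_n.+1 -> Prop)
  (f : 'M[K]_n.+1) : Prop :=
  forall g, G g <-> G (f *m g *m invmx f).

(* P = G x is an isolated fixed point of f_star on M = G\H^2 : near x
   (hyperbolic distance < arcosh (1+eps)), the only points y whose class
   is fixed (G f y = G y) are those with G y = G x. *)
Definition isolated_fixed (G : 'M[R]_3 -> Prop) (f : 'M[R]_3)
  (x : 'cV[R]_3) : Prop :=
  (exists g, G g /\ g *m (f *m x) = x) /\
  exists eps : R, 0 < eps /\
    forall y, H2 y -> - lor x y < 1 + eps ->
      (exists g, G g /\ g *m (f *m y) = y) ->
      exists g, G g /\ g *m y = x.

Definition Spin2 (s : 'M[C]_2) : Prop :=
  exists u : C, u * conjc u = 1 /\ s = diag2 u (conjc u).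

(* Atiyah-Bott convention: Delta^+(diag(u, conj u)) = conj u,
   Delta^-(diag(u, conj u)) = u (one-dimensional, so trace = value) *)
Definition tr_Delta_plus (s : 'M[C]_2) : C := s 1 1.
Definition tr_Delta_minus (s : 'M[C]_2) : C := s 0 0.

(* Matrix of the differential at x = g e3 of the isometry y |-> L y of H^2
   (L fixing x), acting on T_x H^2 = span(g e1, g e2), in the orthonormal
   frame (g e1, g e2): the upper-left 2x2 block of g^-1 L g. *)
Definition dmat (g L : 'M[R]_3) : 'M[R]_2 :=
  \matrix_(i < 2, j < 2) (invmx g *m L *m g) (widen_ord (isT : (2 <= 3)%N) i)
                                              (widen_ord (isT : (2 <= 3)%N) j).

Definition nu (s : 'M[C]_2) (D : 'M[R]_2) : C :=
  (tr_Delta_plus s - tr_Delta_minus s) / ((`|\det (1%:M - D)|)%:C)%C.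

End Defs.
Arguments e3 {R}.
Arguments J2 {R}.
Arguments J3 {R}.

(* Main.v *)
Require Import Defs.
From HB Require Import structures.
From mathcomp Require Import all_boot all_order all_algebra.
From mathcomp Require Import reals.
From mathcomp.real_closed Require Import complex.
Import Order.TTheory GRing.Theory Num.Theory.
Local Open Scope ring_scope.

From mathcomp Require Import ring lra.
From Stdlib Require Import Classical.
Set Implicit Arguments. Unset Strict Implicit. Unset Printing Implicit Defensive.


Section S.
Variable R : realType.
Local Notation C := (complex R).
Implicit Types x y : C.

Lemma ReD x y : complex.Re (x + y) = complex.Re x + complex.Re y. Proof. by case: x; case: y. Qed.
Lemma ImD x y : complex.Im (x + y) = complex.Im x + complex.Im y. Proof. by case: x; case: y. Qed.
Lemma ReN x : complex.Re (- x) = - complex.Re x. Proof. by case: x. Qed.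
Lemma ImN x : complex.Im (- x) = - complex.Im x. Proof. by case: x. Qed.
Lemma ReM x y : complex.Re (x * y) = complex.Re x * complex.Re y - complex.Im x * complex.Im y.
Proof. by case: x; case: y. Qed.
Lemma ImM x y : complex.Im (x * y) = complex.Re x * complex.Im y + complex.Im x * complex.Re y.
Proof. by case: x; case: y. Qed.
Lemma ReJ x : complex.Re (x^*)%C = complex.Re x. Proof. by case: x. Qed.
Lemma ImJ x : complex.Im (x^*)%C = - complex.Im x. Proof. by case: x. Qed.
Lemma ReR (k : R) : complex.Re (k%:C)%C = k. Proof. by []. Qed.
Lemma ImR (k : R) : complex.Im (k%:C)%C = (0 : R). Proof. by []. Qed.
Lemma Re1 : complex.Re (1 : C) = 1. Proof. by []. Qed.
Lemma Im1 : complex.Im (1 : C) = 0. Proof. by []. Qed.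
Lemma Re0 : complex.Re (0 : C) = 0. Proof. by []. Qed.
Lemma Im0 : complex.Im (0 : C) = 0. Proof. by []. Qed.
Lemma ReV x : complex.Re (x^-1) = complex.Re x / nsq x. Proof. by case: x. Qed.
Lemma ImV x : complex.Im (x^-1) = - complex.Im x / nsq x.
Proof. by case: x => a b /=; rewrite /nsq /= mulNr. Qed.
Lemma Rei : complex.Re ('i : C)%C = (0 : R). Proof. by []. Qed.
Lemma Imi : complex.Im ('i : C)%C = (1 : R). Proof. by []. Qed.

Definition cE := (ReD, ImD, ReN, ImN, ReM, ImM, ReJ, ImJ, ReR, ImR, Re1, Im1, Re0, Im0, ReV, ImV, Rei, Imi).

Lemma cplxP x y : complex.Re x = complex.Re y -> complex.Im x = complex.Im y -> x = y.
Proof. by case: x; case: y => /= ? ? ? ? -> ->. Qed.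

Lemma nsqE x : x * (x^*)%C = (nsq x)%:C%C.
Proof. apply: cplxP; rewrite !cE /nsq; ring. Qed.

Lemma nsq_ge0 x : 0 <= nsq x.
Proof. by rewrite /nsq addr_ge0 // sqr_ge0. Qed.

Lemma nsq_eq0 x : (nsq x == 0) = (x == 0).
Proof.
case: x => a b; rewrite /nsq /= paddr_eq0 ?sqr_ge0 // !sqrf_eq0.
by rewrite eq_complex.
Qed.

Lemma nsqM x y : nsq (x * y) = nsq x * nsq y.
Proof. rewrite /nsq !cE; ring. Qed.

Lemma nsqV x : nsq (x^-1) = (nsq x)^-1.
Proof.
have [->|nz] := eqVneq x 0; first by rewrite invr0 /nsq /= !expr0n /= !addr0 invr0.
have : nsq x != 0 by rewrite nsq_eq0.
rewrite {2}/nsq !cE /nsq => h; field; exact: h.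
Qed.

End S.


Lemma sum2 (V : nmodType) (F : 'I_2 -> V) : \sum_(i < 2) F i = F 0 + F 1.
Proof. rewrite !big_ord_recl big_ord0 addr0; congr (F _ + F _); exact: val_inj. Qed.
Lemma sum3 (V : nmodType) (F : 'I_3 -> V) : \sum_(i < 3) F i = F 0 + F 1 + F 2.
Proof. rewrite !big_ord_recl big_ord0 addr0 addrA; congr (F _ + F _ + F _); exact: val_inj. Qed.

Lemma det2 (K : comNzRingType) (A : 'M[K]_2) : \det A = A 0 0 * A 1 1 - A 0 1 * A 1 0.
Proof.
rewrite (expand_det_row _ 0) sum2 /cofactor !det_mx11 !mxE /=.
have -> : lift (0:'I_2) (0:'I_1) = 1 by apply: val_inj.
have -> : lift (1:'I_2) (0:'I_1) = 0 by apply: val_inj.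
rewrite expr0 expr1 mul1r; ring.
Qed.
Lemma ord2 (i : 'I_2) : i = 0 \/ i = 1.
Proof. by case: i => [[|[|//]] ?]; [left|right]; apply: val_inj. Qed.
Lemma ord3 (i : 'I_3) : [\/ i = 0, i = 1 | i = 2].
Proof. by case: i => [[|[|[|//]]] ?]; [apply: Or31|apply: Or32|apply: Or33]; apply: val_inj. Qed.

Section S.
Variable R : realType.
Local Notation C := (complex R).

Lemma prodE (K : pzRingType) (A B : 'M[K]_2) i j : (A *m B) i j = A i 0 * B 0 j + A i 1 * B 1 j.
Proof. by rewrite mxE sum2. Qed.

Lemma J2E i j : (J2 : 'M[C]_2) i j = if i == j then (if i == 0 then 1 else -1) else 0.
Proof. by rewrite mxE. Qed.

Lemma SU11E (A : 'M[C]_2) : SU11 A ->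
  [/\ (A 0 0)^*%C * A 0 0 - (A 1 0)^*%C * A 1 0 = 1,
      (A 0 0)^*%C * A 0 1 - (A 1 0)^*%C * A 1 1 = 0,
      (A 0 1)^*%C * A 0 0 - (A 1 1)^*%C * A 1 0 = 0,
      (A 0 1)^*%C * A 0 1 - (A 1 1)^*%C * A 1 1 = -1 &
      A 0 0 * A 1 1 - A 0 1 * A 1 0 = 1].
Proof.
move=> [h d]; rewrite det2 in d.
have e (i j : 'I_2) := congr1 (fun M : 'M[C]_2 => M i j) h.
move: (e 0 0) (e 0 1) (e 1 0) (e 1 1); rewrite !prodE !J2E !mxE /= => e1 e2 e3 e4.
by split => //; [rewrite -e1|rewrite -e2|rewrite -e3|rewrite -e4]; ring.
Qed.

Lemma SU11I (A : 'M[C]_2) :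
  (A 0 0)^*%C * A 0 0 - (A 1 0)^*%C * A 1 0 = 1 ->
  (A 0 0)^*%C * A 0 1 - (A 1 0)^*%C * A 1 1 = 0 ->
  (A 0 1)^*%C * A 0 0 - (A 1 1)^*%C * A 1 0 = 0 ->
  (A 0 1)^*%C * A 0 1 - (A 1 1)^*%C * A 1 1 = -1 ->
  A 0 0 * A 1 1 - A 0 1 * A 1 0 = 1 -> SU11 A.
Proof.
move=> e1 e2 e3 e4 d; split; last by rewrite det2.
apply/matrixP => i j; rewrite !prodE !J2E !mxE.
by case: (ord2 i) => ->; case: (ord2 j) => -> /=;
  [apply: etrans e1|apply: etrans e2|apply: etrans e3|apply: etrans e4]; ring.
Qed.
End S.
Section S2.
Variable R : realType.
Local Notation C := (complex R).

Lemma adjCM (A B : 'M[C]_2) : adjC (A *m B) = adjC B *m adjC A.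
Proof. by rewrite /adjC map_mxM trmx_mul. Qed.

Lemma SU11_mul (A B : 'M[C]_2) : SU11 A -> SU11 B -> SU11 (A *m B).
Proof.
move=> [hA dA] [hB dB]; split; last by rewrite det_mulmx dA dB mulr1.
by rewrite adjCM !mulmxA -(mulmxA (adjC B)) -(mulmxA (adjC B)) hA.
Qed.

Lemma SU11_unit (A : 'M[C]_2) : SU11 A -> A \in unitmx.
Proof. by move=> [_ d]; rewrite unitmxE d unitr1. Qed.

Lemma SU11_inv (A : 'M[C]_2) : SU11 A -> SU11 (invmx A).
Proof.
move=> hA; have uA := SU11_unit hA; case: hA => h d.
split; last by rewrite det_inv d invr1.
have uA' : adjC A \in unitmx by rewrite unitmxE /adjC det_tr det_map_mx d rmorph1 unitr1.
rewrite /adjC map_invmx trmx_inv -/(adjC A).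
rewrite -[in LHS]h !mulmxA mulVmx // mul1mx -mulmxA mulmxV // mulmx1 //.
Qed.

Lemma SU11_1 : SU11 (1%:M : 'M[C]_2).
Proof.
split; last exact: det1.
by rewrite /adjC map_mx1 trmx1 mul1mx mulmx1.
Qed.

Lemma SU11_diag (u : C) : u * (u^*)%C = 1 -> SU11 (diag2 u (u^*)%C).
Proof.
move=> hu; apply: SU11I; rewrite !mxE /= ?conjcK ?rmorph0 ?mul0r ?mulr0 ?subr0 ?sub0r //.
- by rewrite mulrC.
- have z0 : ((- 0)*i)%C = 0 :> C by apply: cplxP; rewrite /= ?oppr0.
  by rewrite z0 mul0r oppr0.
- have z0 : ((- 0)*i)%C = 0 :> C by apply: cplxP; rewrite /= ?oppr0.
  by rewrite z0 mul0r.
- by rewrite hu.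
Qed.

Lemma disk_id (A : 'M[C]_2) z : SU11 A ->
  nsq (A 0 0 * z + A 0 1) - nsq (A 1 0 * z + A 1 1) = nsq z - 1.
Proof.
move=> /SU11E [e1 e2 e3 e4 _].
set p := A 0 0 * z + A 0 1; set q := A 1 0 * z + A 1 1.
have H : p * (p^*)%C - q * (q^*)%C =
  z * (z^*)%C * ((A 0 0)^*%C * A 0 0 - (A 1 0)^*%C * A 1 0)
  + z * ((A 0 1)^*%C * A 0 0 - (A 1 1)^*%C * A 1 0)
  + (z^*)%C * ((A 0 0)^*%C * A 0 1 - (A 1 0)^*%C * A 1 1)
  + ((A 0 1)^*%C * A 0 1 - (A 1 1)^*%C * A 1 1).
  by rewrite /p /q !rmorphD !rmorphM; ring.
rewrite e1 e2 e3 e4 !nsqE in H.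
have := congr1 (@complex.Re R) H; rewrite !cE.
move=> ->; ring.
Qed.
End S2.
Section S3.
Variable R : realType.
Local Notation C := (complex R).

Lemma mob_den (A : 'M[C]_2) z : SU11 A -> in_disk z ->
  A 1 0 * z + A 1 1 != 0 /\ in_disk (mob A z).
Proof.
move=> hA hz; have := disk_id z hA; rewrite /in_disk in hz.
set p := A 0 0 * z + A 0 1; set q := A 1 0 * z + A 1 1 => e.
have hp := nsq_ge0 p.
have qpos : 0 < nsq q by lra.
have qnz : q != 0 by rewrite -nsq_eq0 gt_eqF.
split => //; rewrite /in_disk /mob -/p -/q nsqM nsqV.
by rewrite ltr_pdivrMr // mul1r; lra.
Qed.

Lemma mob_mul (A B : 'M[C]_2) z : SU11 B -> in_disk z ->
  mob (A *m B) z = mob A (mob B z).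
Proof.
move=> hB hz; have [qnz _] := mob_den hB hz.
rewrite /mob !prodE.
set q := B 1 0 * z + B 1 1 in qnz *.
set p := B 0 0 * z + B 0 1.
have -> : A 0 0 * (p / q) + A 0 1 = (A 0 0 * p + A 0 1 * q) / q by field.
have -> : A 1 0 * (p / q) + A 1 1 = (A 1 0 * p + A 1 1 * q) / q by field.
have k (X Y : C) : (X/q)/(Y/q) = X/Y.
  by rewrite invfM invrK [Y^-1 * q]mulrC mulrA mulfVK.
rewrite k /p /q; congr (_ / _); ring.
Qed.

Lemma mob1 z : mob (1%:M : 'M[C]_2) z = z.
Proof. by rewrite /mob !mxE /= mul1r mul0r addr0 add0r divr1. Qed.

Lemma vec3E (a b c : R) i : vec3 a b c i 0 = if i == 0 then a else if i == 1 then b else c.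
Proof. by rewrite mxE. Qed.

Lemma mulmx_vec3 (X : 'M[R]_3) a b c i :
  (X *m vec3 a b c) i 0 = X i 0 * a + X i 1 * b + X i 2 * c.
Proof. by rewrite mxE sum3 !vec3E. Qed.

Lemma zeta0 : zeta (0 : C) = e3.
Proof.
rewrite /zeta /e3 /nsq /= expr0n /= !addr0 subr0 !divr1 mulr0.
done.
Qed.

Lemma zeta_inj0 (w : C) : in_disk w -> zeta w = e3 -> w = 0.
Proof.
rewrite /in_disk => hw e.
have e0 := congr1 (fun v : 'cV[R]_3 => v 0 0) e.
have e1 := congr1 (fun v : 'cV[R]_3 => v 1 0) e.
move: e0 e1; rewrite /zeta /e3 !vec3E /=.
have nz : 1 - nsq w != 0 by apply/eqP; lra.
move=> /eqP; rewrite mulf_eq0 invr_eq0 (negPf nz) orbF mulf_eq0 pnatr_eq0 /= => /eqP h0.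
move=> /eqP; rewrite mulf_eq0 invr_eq0 (negPf nz) orbF mulf_eq0 pnatr_eq0 /= => /eqP h1.
by apply: cplxP; rewrite ?h0 ?h1.
Qed.

Lemma col_ext (X Y : 'M[R]_3) :
  (forall z : C, in_disk z -> X *m zeta z = Y *m zeta z) -> X = Y.
Proof.
move=> h.
have d0 : in_disk (0 : C) by rewrite /in_disk /nsq /= expr0n /= addr0 ltr01.
have d1 : in_disk (Complex (2^-1) 0 : C).
  rewrite /in_disk /nsq /= expr0n /= addr0; lra.
have d2 : in_disk (Complex 0 (2^-1) : C).
  rewrite /in_disk /nsq /= expr0n /= add0r; lra.
have E z i (dz : in_disk z) := congr1 (fun v : 'cV[R]_3 => v i 0) (h z dz).
apply/matrixP => i j.
move: (E _ i d0) (E _ i d1) (E _ i d2); rewrite /zeta /nsq /= !mulmx_vec3 /=.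
rewrite !expr0n /= ?addr0 ?add0r ?mulr0 ?mul0r ?subr0 ?divr1 ?addr0 ?mulr1.
set a := (2 / 2 / _ : R); set b := ((1 + _) / _ : R).
move=> e0 e1 e2.
have ha : a = 4/3 by rewrite /a; field.
have anz : a != 0 by rewrite ha gt_eqF //; lra.
rewrite !mulr0 !addr0 !add0r in e0 e1 e2.
rewrite e0 in e1 e2; move/addIr: e1 => /(mulIf anz) e1.
move/addIr: e2 => /(mulIf anz) e2.
by case: (ord3 j) => ->.
Qed.
End S3.
Section S4.
Variable R : realType.
Local Notation C := (complex R).

Definition rotm (q : C) : 'M[R]_3 := \matrix_(i < 3, j < 3)
  if i == 0 then (if j == 0 then complex.Re q else if j == 1 then - complex.Im q else 0)
  else if i == 1 then (if j == 0 then complex.Im q else if j == 1 then complex.Re q else 0)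
  else (if j == 2 then 1 else 0).

Lemma unit_nsq (u : C) : u * (u^*)%C = 1 -> nsq u = 1.
Proof. by rewrite nsqE => /(congr1 (@complex.Re R)); rewrite !cE. Qed.

Lemma ord1_0 (j : 'I_1) : j = 0.
Proof. by apply: val_inj; case: j => [[|]]. Qed.

Variable eta : 'M[C]_2 -> 'M[R]_3.
Hypothesis Heta : forall A : 'M[C]_2, SU11 A ->
     forall z : C, in_disk z -> zeta (mob A z) = eta A *m zeta z.

Lemma eta_det (A : 'M[C]_2) (M : 'M[R]_3) : SU11 A ->
  (forall z, in_disk z -> zeta (mob A z) = M *m zeta z) -> eta A = M.
Proof.
move=> hA h; apply: col_ext => z hz; by rewrite -Heta // h.
Qed.

Lemma eta_mul (A B : 'M[C]_2) : SU11 A -> SU11 B -> eta (A *m B) = eta A *m eta B.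
Proof.
move=> hA hB; apply: eta_det; first exact: SU11_mul.
move=> z hz; have [_ d] := mob_den hB hz.
by rewrite mob_mul // Heta // Heta // mulmxA.
Qed.

Lemma eta1 : eta 1%:M = 1%:M.
Proof. by apply: eta_det; [exact: SU11_1| move=> z _; rewrite mob1 mul1mx]. Qed.

Lemma eta_inv (A : 'M[C]_2) : SU11 A -> eta (invmx A) = invmx (eta A).
Proof.
move=> hA.
have h1 : eta (invmx A) *m eta A = 1%:M.
  rewrite -eta_mul; first by rewrite mulVmx ?SU11_unit // eta1.
    exact: SU11_inv.
  done.
have [u1 u2] := mulmx1_unit h1.
by rewrite -[LHS]mulmx1 -(mulmxV u2) mulmxA h1 mul1mx.
Qed.

Lemma eta_diag (u : C) : u * (u^*)%C = 1 -> eta (diag2 u (u^*)%C) = rotm (u ^+ 2).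
Proof.
move=> hu; apply: eta_det; first exact: SU11_diag.
move=> z hz.
have cnz : (u^*)%C != 0.
  by apply/eqP => c0; move: hu; rewrite c0 mulr0 => /eqP; rewrite eq_sym oner_eq0.
have uc : ((u^*)%C)^-1 = u by apply: (mulfI cnz); rewrite mulfV // mulrC hu.
have nu : nsq u = 1 by apply: unit_nsq.
have -> : mob (diag2 u (u^*)%C) z = u ^+ 2 * z.
  by rewrite /mob !mxE /= mul0r add0r addr0 uc; ring.
have nq : nsq (u ^+ 2) = 1 by rewrite expr2 nsqM nu mulr1.
rewrite /in_disk in hz.
have dnz : 1 - nsq z != 0 by apply/eqP; lra.
apply/matrixP => i j; rewrite (ord1_0 j) mulmx_vec3 /zeta !vec3E nsqM nq mul1r.
move: nq dnz; rewrite /nsq.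
by case: (ord3 i) => ->; rewrite !mxE /= !cE => nq dnz; field.
Qed.

Lemma disk0 : in_disk (0 : C).
Proof. by rewrite /in_disk /nsq /= expr0n /= addr0 ltr01. Qed.

Lemma stab0 (K : 'M[C]_2) : SU11 K -> eta K *m e3 = e3 ->
  exists w : C, w * (w^*)%C = 1 /\ K = diag2 w (w^*)%C.
Proof.
move=> hK h.
have := Heta hK disk0; rewrite zeta0 h => e.
have [d1 d2] := mob_den hK disk0.
have m0 := zeta_inj0 d2 e.
move: m0 d1; rewrite /mob !mulr0 !add0r => /eqP; rewrite mulf_eq0 invr_eq0 => h01 nz11.
have k01 : K 0 1 = 0 by apply/eqP; move: h01; rewrite (negPf nz11) orbF.
have [e1 e2 e3 e4 d] := SU11E hK.
rewrite k01 !rmorph0 !mul0r !sub0r in e3 e4.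
rewrite k01 mul0r subr0 in d.
have c11 : (K 1 1)^*%C * K 1 1 = 1 by apply: oppr_inj; rewrite e4.
have cnz : (K 1 1)^*%C != 0.
  by apply/eqP => c0; move: c11; rewrite c0 mul0r => /eqP; rewrite eq_sym oner_eq0.
have k10 : K 1 0 = 0.
  by apply/eqP; move/eqP: e3; rewrite oppr_eq0 mulf_eq0 (negPf cnz).
have k00 : K 0 0 = (K 1 1)^*%C.
  by apply: (mulIf nz11); exact: etrans d (esym c11).
exists (K 0 0); split; first by rewrite {2}k00 conjcK d.
rewrite k00 conjcK.
apply/matrixP => i j; rewrite !mxE.
by case: (ord2 i) => ->; case: (ord2 j) => -> /=; rewrite ?k00 ?k01 ?k10.
Qed.
End S4.

Section S5.
Variable R : realType.
Local Notation C := (complex R).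

Lemma trunc_close (a b : R) : 0 <= a -> 0 <= b -> Num.truncn a = Num.truncn b -> `|a - b| < 1.
Proof.
move=> ha hb e; move: (truncn_itv ha) (truncn_itv hb); rewrite e.
rewrite -addn1 natrD => /andP [h1 h2] /andP [h3 h4].
rewrite ltr_norml; apply/andP; split; lra.
Qed.

Lemma trunc_le (a : R) (M : nat) : 0 <= a -> a <= M%:R -> (Num.truncn a <= M)%N.
Proof.
move=> ha hM; have /andP [h1 _] := truncn_itv ha.
by rewrite -(ler_nat R); apply: le_trans hM.
Qed.

Lemma nsqX (q : C) n : nsq (q ^+ n) = nsq q ^+ n.
Proof.
elim: n => [|n IH]; first by rewrite !expr0 /nsq /= expr0n /= addr0 expr1n.
by rewrite !exprS nsqM IH.
Qed.

Lemma unit_bound (q : C) : nsq q = 1 -> `|complex.Re q| <= 1 /\ `|complex.Im q| <= 1.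
Proof.
rewrite /nsq => h; split; rewrite ler_norml; apply/andP; split; nra.
Qed.


Lemma small_prod (a b u v e : R) : `|a| <= 1 -> `|b| <= 1 -> `|u| < e / 2 -> `|v| < e / 2 ->
  `|a * u - b * v| < e.
Proof.
move=> ha hb hu hv.
apply: le_lt_trans (ler_normB _ _) _.
rewrite !normrM.
have h1 : `|a| * `|u| <= `|u| by rewrite ler_piMl.
have h2 : `|b| * `|v| <= `|v| by rewrite ler_piMl.
lra.
Qed.

Lemma dirichlet (q : C) : nsq q = 1 -> forall e : R, 0 < e ->
  exists n, (0 < n)%N /\ `|complex.Re (q ^+ n) - 1| < e /\ `|complex.Im (q ^+ n)| < e.
Proof.
move=> hq e he.
pose M := (Num.truncn (4 / e)).+1.
have Mpos : 0 < M%:R :> R by rewrite ltr0n.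
have hM : 4 / M%:R < e.
  have /andP [_ h] := truncn_itv (ltW (divr_gt0 (ltr0n R 4) he) : 0 <= 4 / e).
  rewrite -/M in h.
  by rewrite ltr_pdivrMr // -ltr_pdivrMl // mulrC.
pose idx (x : R) : 'I_M.+1 := inord (Num.truncn ((x + 1) * M%:R / 2)).
have idxP x y : `|x| <= 1 -> `|y| <= 1 -> idx x = idx y -> `|x - y| < 2 / M%:R.
  move=> hx hy exy.
  move: hx hy; rewrite !ler_norml => /andP [hx1 hx2] /andP [hy1 hy2].
  have tx0 : 0 <= (x + 1) * M%:R / 2 by apply: divr_ge0 => //; apply: mulr_ge0; lra.
  have ty0 : 0 <= (y + 1) * M%:R / 2 by apply: divr_ge0 => //; apply: mulr_ge0; lra.
  have txM : (x + 1) * M%:R / 2 <= M%:R.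
    by rewrite ler_pdivrMr //; nra.
  have tyM : (y + 1) * M%:R / 2 <= M%:R.
    by rewrite ler_pdivrMr //; nra.
  have := congr1 (@nat_of_ord _) exy; rewrite /idx !inordK ?ltnS ?trunc_le // => /trunc_close.
  move=> /(_ tx0 ty0).
  have -> : (x + 1) * M%:R / 2 - (y + 1) * M%:R / 2 = (x - y) * (M%:R / 2) by ring.
  rewrite normrM (ger0_norm (ltW (divr_gt0 Mpos (ltr0n R 2)))).
  rewrite -ltr_pdivlMr ?divr_gt0 //.
  by rewrite div1r invf_div.
have hM2 : 2 / M%:R < e / 2.
  have -> : 2 / M%:R = (4 / M%:R) / 2 :> R by field; rewrite gt_eqF.
  lra.
pose N := (M.+1 * M.+1)%N.
pose F (k : 'I_N.+1) := (idx (complex.Re (q ^+ k)), idx (complex.Im (q ^+ k))).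
have ninj : ~ injective F.
  by move=> inj; have := leq_card _ inj; rewrite card_prod !card_ord ltnn.
have [i [j [hij nij]]] : exists i j, F i = F j /\ i <> j.
  apply: NNPP => hn; apply: ninj => i j hij; apply: NNPP => nij; apply: hn.
  by exists i, j.
have claim (a b : nat) : (a < b)%N ->
    idx (complex.Re (q ^+ a)) = idx (complex.Re (q ^+ b)) ->
    idx (complex.Im (q ^+ a)) = idx (complex.Im (q ^+ b)) ->
  exists n, (0 < n)%N /\ `|complex.Re (q ^+ n) - 1| < e /\ `|complex.Im (q ^+ n)| < e.
  move=> ab hre him; exists (b - a)%N; split; first by rewrite subn_gt0.
  set n := (b - a)%N.
  have qb : q ^+ b = q ^+ a * q ^+ n by rewrite -exprD /n subnKC // ltnW.
  have na : nsq (q ^+ a) = 1 by rewrite nsqX hq expr1n.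
  have nb : nsq (q ^+ b) = 1 by rewrite nsqX hq expr1n.
  have [ra ia] := unit_bound na.
  have [rb ib] := unit_bound nb.
  set c := ((q ^+ a)^*)%C.
  have ca : c * q ^+ a = 1 by rewrite mulrC /c nsqE na.
  set d := q ^+ b - q ^+ a.
  have E : q ^+ n - 1 = c * d by rewrite /d qb mulrBr mulrA ca mul1r.
  have [rc ic] : `|complex.Re c| <= 1 /\ `|complex.Im c| <= 1.
    by rewrite /c ReJ ImJ normrN.
  have rd : `|complex.Re d| < e / 2.
    rewrite /d ReD ReN distrC; apply: lt_trans (idxP _ _ ra rb hre) _.
    exact: hM2.
  have id : `|complex.Im d| < e / 2.
    rewrite /d ImD ImN distrC; apply: lt_trans (idxP _ _ ia ib him) _.
    exact: hM2.
  clearbody c d.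
  have ER := congr1 (@complex.Re R) E; have EI := congr1 (@complex.Im R) E.
  rewrite !cE in ER EI.
  split; first by rewrite ER; exact: small_prod.
  move: EI; rewrite subr0 => ->.
  have -> : complex.Re c * complex.Im d + complex.Im c * complex.Re d =
    complex.Re c * complex.Im d - (- complex.Im c) * complex.Re d by ring.
  by apply: small_prod => //; rewrite normrN.
case: (ltngtP i j) => hl.
- by apply: claim hl _ _; case: hij.
- by apply: claim hl _ _; case: hij.
- by exfalso; apply: nij; apply: val_inj.
Qed.
End S5.

Section S6.
Variable R : realType.
Local Notation C := (complex R).

Lemma le_sum3 (F : 'I_3 -> R) i : (forall k, 0 <= F k) -> F i <= \sum_k F k.
Proof. move=> h; rewrite sum3; have := h 0; have := h 1; have := h 2; case: (ord3 i) => ->; lra. Qed.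

Lemma norm3 (x y z : R) : `|x + y + z| <= `|x| + `|y| + `|z|.
Proof. by apply: le_trans (ler_normD _ _) _; rewrite lerD2r ler_normD. Qed.

Lemma prod_le (x y a e : R) : `|x| <= a -> `|y| <= e -> `|x * y| <= a * e.
Proof. by move=> h1 h2; rewrite normrM; apply: ler_pM. Qed.

Lemma entry_bound (A : 'M[R]_3) i k : `|A i k| <= \sum_i' \sum_k' `|A i' k'|.
Proof.
apply: le_trans (le_sum3 (F := fun k' => `|A i k'|) k _) _ => //.
apply: (le_sum3 (F := fun i' => \sum_k' `|A i' k'|)) => i'.
by apply: sumr_ge0 => *.
Qed.

Lemma conj_bound (A X B : 'M[R]_3) a b e :
  (forall i k, `|A i k| <= a) -> (forall k l, `|X k l| <= e) -> (forall l j, `|B l j| <= b) ->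
  forall i j, `|(A *m X *m B) i j| <= 9 * (a * e * b).
Proof.
move=> hA hX hB.
have h1 i l : `|(A *m X) i l| <= 3 * (a * e).
  rewrite mxE sum3; apply: le_trans (norm3 _ _ _) _.
  have := prod_le (hA i 0) (hX 0 l); have := prod_le (hA i 1) (hX 1 l);
  have := prod_le (hA i 2) (hX 2 l); lra.
move=> i j; rewrite mxE sum3; apply: le_trans (norm3 _ _ _) _.
have := prod_le (h1 i 0) (hB 0 j); have := prod_le (h1 i 1) (hB 1 j);
have := prod_le (h1 i 2) (hB 2 j); lra.
Qed.
End S6.


Lemma conj_pow (K : comUnitRingType) m (g X : 'M[K]_m.+1) n : g \in unitmx ->
  (g *m X *m invmx g) ^+ n = g *m X ^+ n *m invmx g.
Proof.
move=> gu; elim: n => [|n IH]; first by rewrite !expr0 mulmx1 mulmxV.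
rewrite !exprS IH -!mulmxE !mulmxA mulmxKV //.
Qed.

Section S7.
Variable R : realType.
Local Notation C := (complex R).
Variable eta : 'M[C]_2 -> 'M[R]_3.
Hypothesis Heta : forall A : 'M[C]_2, SU11 A ->
     forall z : C, in_disk z -> zeta (mob A z) = eta A *m zeta z.

Lemma SU11_pow (k : 'M[C]_2) n : SU11 k -> SU11 (k ^+ n).
Proof.
move=> hk; elim: n => [|n IH]; first by rewrite expr0; exact: SU11_1.
by rewrite exprS -mulmxE; apply: SU11_mul.
Qed.

Lemma eta_pow (k : 'M[C]_2) n : SU11 k -> eta (k ^+ n) = eta k ^+ n.
Proof.
move=> hk; elim: n => [|n IH]; first by rewrite !expr0 (eta1 Heta).
by rewrite !exprS -!mulmxE (eta_mul Heta) ?IH //; apply: SU11_pow.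
Qed.

Lemma diag_mul (a b c d : C) : diag2 a b *m diag2 c d = diag2 (a * c) (b * d).
Proof.
apply/matrixP => i j; rewrite prodE !mxE.
by case: (ord2 i) => ->; case: (ord2 j) => -> /=; rewrite ?mulr0 ?mul0r ?addr0 ?add0r.
Qed.

Lemma diag_pow (w : C) n : (diag2 w (w^*)%C) ^+ n = diag2 (w ^+ n) ((w ^+ n)^*)%C.
Proof.
elim: n => [|n IH].
  rewrite !expr0 rmorph1; apply/matrixP => i j; rewrite !mxE.
  by case: (ord2 i) => ->; case: (ord2 j) => ->.
by rewrite exprS -mulmxE IH diag_mul -rmorphM -exprS.
Qed.


Lemma G_pow (G : 'M[R]_3 -> Prop) h n : subgroup_SO G -> G h -> G (h ^+ n).
Proof.
move=> [_ G1 GM _] Gh; elim: n => [|n IH]; first by rewrite expr0; exact: G1.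
by rewrite exprS -mulmxE; apply: GM.
Qed.

Lemma stab_trivial (Gamma : 'M[R]_3 -> Prop) (Gammahat : 'M[C]_2 -> Prop)
  (HG : subgroup_SO Gamma) (HGdisc : discrete Gamma) (HGtf : torsion_free Gamma)
  (HGh : subgroup_SU Gammahat)
  (Hiso_into : forall a, Gammahat a -> Gamma (eta a))
  (g : 'M[R]_3) (ghat : 'M[C]_2) (Hgu : g \in unitmx) (Hgh : SU11 ghat) (Hghl : eta ghat = g)
  (k : 'M[C]_2) (hk : Gammahat k) (hkx : eta k *m (g *m e3) = g *m e3) : eta k = 1%:M.
Proof.
have sk : SU11 k by case: HGh => h _ _ _; exact: h.
set K := invmx ghat *m k *m ghat.
have sK : SU11 K by rewrite /K; apply: SU11_mul => //; apply: SU11_mul => //; exact: SU11_inv.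
have etaK : eta K = invmx g *m eta k *m g.
  have si : SU11 (invmx ghat) by exact: SU11_inv.
  have sik : SU11 (invmx ghat *m k) by exact: SU11_mul.
  by rewrite /K (eta_mul Heta sik Hgh) (eta_mul Heta si sk) (eta_inv Heta Hgh) Hghl.
have Ke3 : eta K *m e3 = e3.
  by rewrite etaK -!mulmxA hkx mulKmx.
have [w [hw eK]] := stab0 Heta sK Ke3.
have etak : eta k = g *m rotm (w ^+ 2) *m invmx g.
  by rewrite -(eta_diag Heta hw) -eK etaK !mulmxA mulmxV // mul1mx mulmxK.
set q := w ^+ 2.
have nq : nsq q = 1 by rewrite /q nsqX (unit_nsq hw) expr1n.
have [eps [epos Hd]] := HGdisc.
set a := \sum_i \sum_k `|g i k|.
set b := \sum_i \sum_k `|(invmx g) i k|.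
have a0 : 0 <= a by apply: sumr_ge0 => *; apply: sumr_ge0 => *.
have b0 : 0 <= b by apply: sumr_ge0 => *; apply: sumr_ge0 => *.
set P := 9 * (a * b).
have P0 : 0 <= P by rewrite /P mulr_ge0 // mulr_ge0.
set e' := eps / (P + 1).
have e'0 : 0 < e' by rewrite /e' divr_gt0 //; lra.
have [n [n0 [hre him]]] := dirichlet nq e'0.
have Yn : eta k ^+ n = g *m rotm (q ^+ n) *m invmx g.
  rewrite etak conj_pow // -(eta_diag Heta hw) -eK -eta_pow //.
  rewrite eK diag_pow (eta_diag Heta); first by rewrite /q exprAC.
  by rewrite rmorphXn -exprMn hw expr1n.
have GY : Gamma (eta k ^+ n) by apply: G_pow => //; exact: Hiso_into.
have Y1 : eta k ^+ n = 1%:M.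
  apply: Hd => // i j.
  have -> : (eta k ^+ n) i j - (1%:M : 'M[R]_3) i j = (eta k ^+ n - 1%:M) i j by rewrite !mxE.
  have -> : eta k ^+ n - 1%:M = g *m (rotm (q ^+ n) - 1%:M) *m invmx g.
    by rewrite Yn mulmxBr mulmxBl mulmx1 mulmxV.
  have hX : forall k l, `|(rotm (q ^+ n) - 1%:M) k l| <= e'.
    move=> k' l; rewrite !mxE.
    by case: (ord3 k') => ->; case: (ord3 l) => -> /=; rewrite ?subr0 ?normrN ?subrr ?normr0 ?(ltW e'0) //; exact: ltW.
  apply: le_lt_trans (conj_bound (@entry_bound _ g) hX (@entry_bound _ (invmx g)) i j) _.
  rewrite -/a -/b.
  have P1 : P + 1 != 0 by rewrite gt_eqF //; lra.
  have -> : 9 * (a * e' * b) = eps * (P / (P + 1)) by rewrite /e' /P; field; rewrite -/P; exact: P1.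
  rewrite gtr_pMr // ltr_pdivrMr ?mul1r; lra.
by apply: (HGtf _ n) => //; exact: Hiso_into.
Qed.
End S7.

Section S8.
Variable R : realType.
Local Notation C := (complex R).

Lemma det_dmat (g L : 'M[R]_3) (q : C) : invmx g *m L *m g = rotm q ->
  \det (1%:M - dmat g L) = (1 - complex.Re q) ^+ 2 + (complex.Im q) ^+ 2.
Proof.
move=> h; rewrite /dmat h det2 !mxE /=.
ring.
Qed.

Lemma rotm_e3 (q : C) : rotm q *m e3 = e3.
Proof.
apply/matrixP => i j; rewrite (ord1_0 j) mulmx_vec3 !vec3E.
by case: (ord3 i) => ->; rewrite !mxE /= ?mulr0 ?addr0 ?add0r ?mulr1.
Qed.

Lemma ReC (a b : R) : complex.Re (Complex a b) = a. Proof. by []. Qed.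
Lemma ImC (a b : R) : complex.Im (Complex a b) = b. Proof. by []. Qed.
Lemma Ren n : complex.Re (n%:R : C) = n%:R.
Proof. elim: n => [//|n IH]; by rewrite -addn1 natrD ReD IH natrD. Qed.
Lemma Imn n : complex.Im (n%:R : C) = 0.
Proof. elim: n => [//|n IH]; by rewrite -addn1 natrD ImD IH add0r. Qed.
Definition cE' := (cE, Ren, Imn).

Lemma final_id (u : C) : nsq u = 1 ->
  ((u^*)%C - u) / ((`| (1 - complex.Re (u ^+ 2)) ^+ 2 + (complex.Im (u ^+ 2)) ^+ 2 |)%:C)%C
  = 1 / (2%:R * (complex.Im u)%:C * 'i)%C.
Proof.
rewrite /nsq => hab.
have -> : `| (1 - complex.Re (u ^+ 2)) ^+ 2 + (complex.Im (u ^+ 2)) ^+ 2 | = 4 * (complex.Im u) ^+ 2.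
  rewrite expr2 !cE.
  have -> : (1 - (complex.Re u * complex.Re u - complex.Im u * complex.Im u)) ^+ 2 +
     (complex.Re u * complex.Im u + complex.Im u * complex.Re u) ^+ 2 =
      4 * (complex.Im u) ^+ 2 + ((complex.Re u) ^+ 2 + (complex.Im u) ^+ 2 - 1) ^+ 2 by ring.
  by rewrite hab subrr expr0n addr0 ger0_norm // mulr_ge0 // sqr_ge0.
rewrite -subcJ.
have e1 : (u^*)%C - u = - (u - (u^*)%C) by rewrite opprB.
have e2 : ((4 * (complex.Im u) ^+ 2)%:C)%C = - ((u - (u^*)%C) * (u - (u^*)%C)).
  by apply: cplxP; rewrite !cE'; ring.
rewrite e1 e2.
set z := u - (u^*)%C.
have [->|zn] := eqVneq z 0; first by rewrite !mul0r oppr0 invr0 !mulr0.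
rewrite invrN mulNr mulrN opprK; field.
by rewrite zn.
Qed.
End S8.

Unset Implicit Arguments.

Theorem theorem10p1 (R : realType)
  (eta : 'M[complex R]_2 -> 'M[R]_3)
  (Heta : forall A : 'M[complex R]_2, SU11 A ->
     forall z : complex R, in_disk z -> zeta (mob A z) = eta A *m zeta z)
  (Gamma : 'M[R]_3 -> Prop) (Gammahat : 'M[complex R]_2 -> Prop)
  (HG : subgroup_SO Gamma) (HGdisc : discrete Gamma)
  (HGtf : torsion_free Gamma) (HGcpt : cocompact Gamma)
  (HGh : subgroup_SU Gammahat)
  (Hiso_into : forall a, Gammahat a -> Gamma (eta a))
  (Hiso_inj : forall a b, Gammahat a -> Gammahat b -> eta a = eta b -> a = b)
  (Hiso_onto : forall g, Gamma g -> exists a, Gammahat a /\ eta a = g)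
  (f : 'M[R]_3) (fhat : 'M[complex R]_2)
  (Hf : SOp21 f) (Hfn : normalizes Gamma f)
  (Hfh : SU11 fhat) (Hfhn : normalizes Gammahat fhat) (Hfl : eta fhat = f)
  (x : 'cV[R]_3) (Hx : H2 x) (Hiso : isolated_fixed Gamma f x)
  (g : 'M[R]_3) (Hg : SOp21 g) (Hgx : g *m e3 = x)
  (ghat : 'M[complex R]_2) (Hgh : SU11 ghat) (Hghl : eta ghat = g)
  (gamma : 'M[R]_3) (Hgam : Gamma gamma) (Hgamx : gamma *m (f *m x) = x)
  (gammahat : 'M[complex R]_2) (Hgamh : Gammahat gammahat)
  (Hgaml : eta gammahat = gamma) :
  exists u : complex R,
    [/\ u * conjc u = 1,
        invmx ghat *m gammahat *m fhat *m ghat = diag2 u (conjc u) &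
        forall s : 'M[complex R]_2, Spin2 s ->
          (exists h, Gammahat h /\ fhat *m ghat = h *m (ghat *m s)) ->
          nu s (dmat g (gamma *m f)) = 1 / (2%:R * (complex.Im u)%:C * 'i)%C].
Proof.
have gu : g \in unitmx by case: Hg => _ [d _]; rewrite unitmxE d unitr1.
case: (HGh) => SUh _ GhM GhI.
have sgam := SUh _ Hgamh.
have gamu : gamma \in unitmx.
  by case: HG => h _ _ _; case: (h _ Hgam) => _ [d _]; rewrite unitmxE d unitr1.
set B := invmx ghat *m gammahat *m fhat *m ghat.
have si : SU11 (invmx ghat) by exact: SU11_inv.
have s1 : SU11 (invmx ghat *m gammahat) by exact: SU11_mul.
have s2 : SU11 (invmx ghat *m gammahat *m fhat) by exact: SU11_mul.
have sB : SU11 B by exact: SU11_mul.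
have etaB : eta B = invmx g *m gamma *m f *m g.
  by rewrite /B (eta_mul Heta s2 Hgh) (eta_mul Heta s1 Hfh) (eta_mul Heta si sgam)
    (eta_inv Heta Hgh) Hghl Hgaml Hfl.
have Be3 : eta B *m e3 = e3.
  by rewrite etaB -!mulmxA Hgx Hgamx -Hgx mulKmx.
have [u [hu eB]] := stab0 Heta sB Be3.
exists u; split => //.
move=> s [v [hv es]] [h [hh eh]].
have sh : SU11 h := SUh _ hh.
have sih : SU11 (invmx h) by exact: SU11_inv.
have hun : h \in unitmx by exact: SU11_unit.
have ss : SU11 s by rewrite es; exact: SU11_diag.
have e1 : invmx h *m fhat *m ghat = ghat *m s by rewrite -mulmxA eh mulKmx.
have e2 : eta (invmx h) *m f *m g = g *m eta s.
  have := congr1 eta e1.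
  have sihf : SU11 (invmx h *m fhat) by exact: SU11_mul.
  by rewrite (eta_mul Heta sihf Hgh) (eta_mul Heta sih Hfh) (eta_mul Heta Hgh ss) Hfl Hghl.
have se3 : eta s *m e3 = e3 by rewrite es (eta_diag Heta hv) rotm_e3.
have fx : f *m x = invmx gamma *m x by rewrite -[in RHS]Hgamx mulKmx.
have hx : eta (invmx h) *m (f *m x) = x.
  by rewrite -Hgx !mulmxA e2 -mulmxA se3.
set k := invmx h *m invmx gammahat.
have hk : Gammahat k by apply: GhM; apply: GhI.
have sinvg : SU11 (invmx gammahat) by exact: SU11_inv.
have etak : eta k = eta (invmx h) *m invmx gamma.
  by rewrite /k (eta_mul Heta sih sinvg) (eta_inv Heta sgam) Hgaml.
have kx : eta k *m (g *m e3) = g *m e3.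
  by rewrite Hgx etak -mulmxA -fx hx.
have k1 := stab_trivial Heta HG HGdisc HGtf HGh Hiso_into gu Hgh Hghl hk kx.
have ehg : eta (invmx h) = gamma.
  by rewrite -[LHS]mulmx1 -(mulVmx gamu) mulmxA -etak k1 mul1mx.
have ihg : invmx h = gammahat.
  by apply: Hiso_inj => //; [apply: GhI | rewrite ehg Hgaml].
have sB' : s = B.
  have -> : B = invmx ghat *m (invmx h *m fhat *m ghat) by rewrite /B ihg !mulmxA.
  by rewrite e1 mulKmx // SU11_unit.
rewrite sB' eB.
have etaB' : invmx g *m (gamma *m f) *m g = rotm (u ^+ 2).
  by rewrite mulmxA -etaB eB (eta_diag Heta hu).
rewrite /nu (det_dmat etaB') /tr_Delta_plus /tr_Delta_minus !mxE /=.
exact: final_id (unit_nsq hu).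
Qed.
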